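(* Let $\Delta$ be a pure $d$-dimensional simplicial complex on vertex set $[n]$, and $\mathbb{K}$ a field. For every $1\le i\le d-1$ there exists $j\ge1$ such that $\mathcal{F}(\Delta^{(i)})^{(j)}\neq\mathcal{F}(\Delta^{(i)})^j$ in $\mathbb{K}[x_1,\dots,x_n]$.
   Context: $\Delta^{(i)}$ is the $i$-th skeleton of $\Delta$ (faces of dimension at most $i$). For a simplicial complex $\Gamma$ with facets $F_1,\dots,F_s$, $\mathcal{F}(\Gamma)=(x_{F_1},\dots,x_{F_s})$ with $x_F=\prod_{j\in F}x_j$. For a squarefree monomial ideal $I$, $I^{(m)}=\bigcap_{P\in\mathrm{Ass}(I)}P^m$. *)

(* Defs.v *)
From HB Require Import structures.
From mathcomp Require Import all_boot all_order all_algebra.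
From mathcomp Require Import mpoly.
Set Implicit Arguments. Unset Strict Implicit. Unset Printing Implicit Defensive.
Import GRing.Theory.
Local Open Scope ring_scope.

Section Ideals.
Variables (K : fieldType) (n : nat).
Local Notation P := {mpoly K[n]}.

Definition ideal_gen (S : P -> Prop) : P -> Prop :=
  fun g => exists rs : seq (P * P),
    (forall q, q \in rs -> S q.2) /\ g = \sum_(q <- rs) q.1 * q.2.

Definition ideal_pow (I : P -> Prop) (m : nat) : P -> Prop :=
  ideal_gen (fun g => exists s : seq P,
    [/\ size s = m, (forall a, a \in s -> I a) & g = \prod_(a <- s) a]).

Definition is_ideal (I : P -> Prop) : Prop :=
  [/\ I 0, (forall a b, I a -> I b -> I (a + b)) & (forall r a, I a -> I (r * a))].

Definition prime_ideal (I : P -> Prop) : Prop :=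
  [/\ is_ideal I, ~ I 1 & (forall a b, I (a * b) -> I a \/ I b)].

(* Associated primes: primes of the form (I : f). *)
Definition ass_prime (I Pr : P -> Prop) : Prop :=
  prime_ideal Pr /\ exists f : P, forall g, Pr g <-> I (g * f).

Definition symb_pow (I : P -> Prop) (m : nat) : P -> Prop :=
  fun g => forall Pr, ass_prime I Pr -> ideal_pow Pr m g.

Definition ideal_eq (I J : P -> Prop) : Prop := forall g, I g <-> J g.

End Ideals.

Section Complexes.
Variable n : nat.

Definition simplicial_complex (D : {set {set 'I_n}}) : Prop :=
  D != set0 /\ (forall F G : {set 'I_n}, F \in D -> G \subset F -> G \in D).

Definition has_vertex_set (D : {set {set 'I_n}}) : Prop :=
  forall v : 'I_n, [set v] \in D.

Definition facets (D : {set {set 'I_n}}) : {set {set 'I_n}} :=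
  [set F in D | [forall G in D, (F \subset G) ==> (G == F)]].

Definition pure_dim (D : {set {set 'I_n}}) (d : nat) : Prop :=
  forall F, F \in facets D -> #|F| = d.+1.

Definition skeleton (D : {set {set 'I_n}}) (i : nat) : {set {set 'I_n}} :=
  [set F in D | (#|F| <= i.+1)%N].

Definition facet_ideal (K : fieldType) (D : {set {set 'I_n}}) : {mpoly K[n]} -> Prop :=
  ideal_gen (fun g => exists2 F, F \in facets D & g = \prod_(j in F) 'X_j).

End Complexes.

(* Main.v *)
Require Import Defs.
From HB Require Import structures.
From mathcomp Require Import all_boot all_order all_algebra.
From mathcomp Require Import mpoly.
From mathcomp Require Import zify.
Set Implicit Arguments. Unset Strict Implicit. Unset Printing Implicit Defensive.
Import GRing.Theory.
Local Open Scope ring_scope.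

Section H.
Variables (K : fieldType) (n : nat).
Definition Pk (k : nat) (g : {mpoly K[n]}) := forall m : 'X_{1..n}, (mdeg m < k)%N -> g@_m = 0.

Lemma Pmul k1 k2 a b : Pk k1 a -> Pk k2 b -> Pk (k1 + k2) (a * b).
Proof.
move=> Ha Hb m Hm; rewrite mcoeffM big1 // => -[p q] /= /eqP Hk.
have E : mdeg m = (mdeg p + mdeg q)%N by rewrite -mdegD -Hk.
case: (ltnP (mdeg p) k1) => h; first by rewrite Ha // mul0r.
rewrite Hb ?mulr0 //; lia.
Qed.

Lemma Pgen k S g : (forall q, S q -> Pk k q) -> ideal_gen S g -> Pk k g.
Proof.
move=> HS [rs [Hrs ->]] m Hm.
rewrite raddf_sum big_seq big1 // => q Hq.
have H0 : Pk 0 q.1 by move=> ? .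
by apply: (Pmul H0 (HS _ (Hrs q Hq))).
Qed.

Lemma prodXE (F : {set 'I_n}) :
  \prod_(j in F) ('X_j : {mpoly K[n]}) = 'X_[\sum_(j in F) U_(j)].
Proof. by rewrite -mprodXE. Qed.

Lemma mdegF (F : {set 'I_n}) : mdeg (\sum_(j in F) U_(j))%MM = #|F|.
Proof. by rewrite mdeg_sum (eq_bigr (fun _ => 1%N)) ?sum1_card // => j _; rewrite mdeg1. Qed.

Lemma PX (F : {set 'I_n}) : Pk #|F| (\prod_(j in F) 'X_j).
Proof.
move=> m Hm; rewrite prodXE mcoeffX.
case: eqP => // E; move: Hm; by rewrite -E mdegF ltnn.
Qed.

Lemma coefX (F : {set 'I_n}) : (\prod_(j in F) ('X_j : {mpoly K[n]}))@_(\sum_(j in F) U_(j))%MM = 1.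
Proof. by rewrite prodXE mcoeffX eqxx. Qed.

Lemma prime_prod (Pr : {mpoly K[n]} -> Prop) (r : seq 'I_n) :
  prime_ideal Pr -> Pr (\prod_(j <- r) 'X_j) -> exists2 v, v \in r & Pr 'X_v.
Proof.
move=> [_ H1 Hm]; elim: r => [|a r IH]; first by rewrite big_nil.
rewrite big_cons => /Hm [Ha|Hr]; first by exists a; rewrite ?mem_head.
by case: (IH Hr) => v Hv Pv; exists v; rewrite // in_cons Hv orbT.
Qed.
End H.

Lemma grow (T : finType) (G A : {set T}) k :
  G \subset A -> (#|G| <= k)%N -> (k <= #|A|)%N ->
  exists B : {set T}, [/\ G \subset B, B \subset A & #|B| = k].
Proof.
move=> GA; elim: k => [|k IH].
  rewrite leqn0 cards_eq0 => /eqP -> _; exists set0; by split; rewrite ?sub0set ?cards0.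
move=> h1 h2; case: (ltnP #|G| k.+1) => h; last first.
  by exists G; split => //; apply/eqP; rewrite eqn_leq h1 h.
have [B [GB BA cB]] : exists B : {set T}, [/\ G \subset B, B \subset A & #|B| = k] by apply: IH; lia.
have [v vA vB] : exists2 v, v \in A & v \notin B.
  apply/exists_inP; rewrite -(negbK [exists _ in _, _]) negb_exists_in.
  apply/negP => /forall_inP H.
  have : A \subset B by apply/subsetP => x /H; rewrite negbK.
  move/subset_leq_card; lia.
exists (v |: B); split.
- exact: (subset_trans GB (subsetUr _ _)).
- by rewrite subUset sub1set vA BA.
- by rewrite cardsU1 vB cB.
Qed.

Lemma facet_of n (D : {set {set 'I_n}}) (G : {set 'I_n}) :
  simplicial_complex D -> G \in D -> exists Fc, Fc \in facets D /\ G \subset Fc.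
Proof.
move=> [_ Hcl] GD.
have HG : (fun H : {set 'I_n} => (H \in D) && (G \subset H)) G by rewrite /= GD subxx.
case: (@arg_maxnP _ G (fun H : {set 'I_n} => (H \in D) && (G \subset H)) (fun H : {set 'I_n} => #|H|) HG) => Fc /= /andP[FcD GFc] Hmax.
exists Fc; split=> //; rewrite /facets inE FcD /=; apply/forall_inP => H HD; apply/implyP => FcH.
rewrite eq_sym eqEcard FcH /=; apply: Hmax; by rewrite /= HD (subset_trans GFc FcH).
Qed.

Theorem proposition6p2 (K : fieldType) (n d : nat) (D : {set {set 'I_n}}) :
  simplicial_complex D -> has_vertex_set D -> pure_dim D d ->
  forall i : nat, (1 <= i <= d - 1)%N ->
  exists j : nat, (1 <= j)%N /\
    ~ ideal_eq (symb_pow (@facet_ideal n K (skeleton D i)) j)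
               (ideal_pow (@facet_ideal n K (skeleton D i)) j).
Proof.
move=> HD _ Hpure i /andP[i1 id]; exists 2%N; split => // Heq.
have [Dne Hcl] := HD.
set Sk := skeleton D i.
have set0D : set0 \in D by case/set0Pn: Dne => G GD; exact: Hcl G set0 GD (sub0set _).
have [Fc [FcF _]] := facet_of HD set0D.
have cFc := Hpure _ FcF.
move: (FcF); rewrite inE => /andP[FcD _].
have [S [_ SFc cS]] := @grow _ set0 Fc i.+2 (sub0set Fc) ltac:(by rewrite cards0) ltac:(lia).
have SD : S \in D := Hcl _ _ FcD SFc.
have skF : forall F : {set 'I_n}, F \subset S -> #|F| = i.+1 -> F \in facets Sk.
  move=> F FS cF; rewrite inE.
  have FSk : F \in Sk by rewrite inE (Hcl _ _ SD FS) cF leqnn.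
  rewrite FSk /=; apply/forall_inP => G; rewrite inE => /andP[_ cG]; apply/implyP => FG.
  by rewrite eq_sym eqEcard FG cF.
have skdeg : forall F : {set 'I_n}, F \in facets Sk -> #|F| = i.+1.
  move=> F; rewrite inE => /andP[]; rewrite inE => /andP[FD cF] /forall_inP Hmax.
  case: (ltnP #|F| i.+1) => h; last by apply/eqP; rewrite eqn_leq cF h.
  have [Fc' [Fc'F FFc']] := facet_of HD FD.
  have cFc' := Hpure _ Fc'F.
  move: (Fc'F); rewrite inE => /andP[Fc'D _].
  have [B [FB BFc' cB]] := @grow _ F Fc' i.+1 FFc' ltac:(lia) ltac:(lia).
  have BSk : B \in Sk by rewrite inE (Hcl _ _ Fc'D BFc') cB leqnn.
  have := Hmax B BSk; rewrite FB /= => /eqP E; by rewrite -E.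
have HPI : forall g, @facet_ideal n K Sk g -> Pk i.+1 g.
  move=> g; apply: Pgen => q [F FF ->]; rewrite -(skdeg F FF); exact: PX.
have HP2 : forall g, ideal_pow (@facet_ideal n K Sk) 2 g -> Pk (i.+1 + i.+1) g.
  move=> g; apply: Pgen => q [s [Hs Hin ->]].
  case: s Hs Hin => [|a [|b [|]]] //= _ Hin.
  rewrite big_cons big_cons big_nil mulr1.
  by apply: Pmul; apply: HPI; apply: Hin; rewrite !inE eqxx ?orbT.
have Hsym : symb_pow (@facet_ideal n K Sk) 2 (\prod_(j in S) 'X_j).
  move=> Pr [Hpr [f Hf]].
  have Hx : forall F : {set 'I_n}, F \subset S -> #|F| = i.+1 -> exists2 v, v \in F & Pr 'X_v.
    move=> F FS cF.
    have HPF : Pr (\prod_(j <- enum F) 'X_j).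
      rewrite big_enum; apply/Hf.
      exists [:: (f, \prod_(j in F) 'X_j)]; split.
        move=> q; rewrite inE => /eqP -> /=; exists F => //; exact: skF.
      by rewrite big_seq1 /= mulrC.
    have [v] := prime_prod Hpr HPF.
    by rewrite mem_enum => vF Pv; exists v.
  have [B [_ BS cB]] := @grow _ set0 S i.+1 (sub0set S) ltac:(by rewrite cards0) ltac:(lia).
  have [a aB Pa] := Hx B BS cB.
  have aS : a \in S := subsetP BS a aB.
  have [b] := Hx (S :\ a) (subsetDl _ _) ltac:(move: (cardsD1 a S); rewrite aS cS; lia).
  rewrite in_setD1 => /andP[ba bS] Pb.
  have bc : (b \in S) && (b != a) by rewrite bS ba.
  rewrite (bigD1 a aS) (bigD1 b bc) /=.
  exists [:: (\prod_(j | (j \in S) && (j != a) && (j != b)) 'X_j, 'X_a * 'X_b)]; split.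
    move=> q; rewrite inE => /eqP -> /=; exists [:: 'X_a; 'X_b]; split => //.
      by move=> c; rewrite !inE => /orP[] /eqP ->.
    by rewrite big_cons big_cons big_nil mulr1.
  by rewrite big_seq1 /= mulrA mulrC.
have := HP2 _ ((Heq _).1 Hsym) (\sum_(j in S) U_(j))%MM.
rewrite mdegF cS coefX => H.
have : (1 : K) = 0 by apply: H; lia.
by apply/eqP; exact: oner_neq0.
Qed.
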